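(* Let $V$ be a vector space of dimension $2r$ ($r\ge1$) over $\mathbb{F}_2$ with nondegenerate quadratic form $Q$, and suppose $V$ has a symmetric basis. (i) If $r\equiv 0$ or $1\pmod 4$, then $Q$ is hyperbolic. (ii) If $r\equiv 2$ or $3\pmod 4$, then $Q$ is elliptic.
   Context: The associated bilinear form of $Q$ is $B(u,v)=Q(u+v)-Q(u)-Q(v)$, and $Q$ is nondegenerate if $B$ is. $Q$ is hyperbolic if $V$ has a basis $e_1,\dots,e_r,f_1,\dots,f_r$ with $Q(e_i)=Q(f_i)=0$, $B(e_i,e_j)=B(f_i,f_j)=0$, $B(e_i,f_j)=\delta_{ij}$; it is elliptic if $V$ has a basis $e_1,\dots,e_{r-1},f_1,\dots,f_{r-1},x,y$ with the same relations among the $e_i,f_i$, all $e_i,f_i$ orthogonal to $x,y$, $Q(x)=Q(y)=1$, $B(x,y)=1$. (Every nondegenerate quadratic form on $\mathbb{F}_2^{2r}$ is exactly one of these.) A basis $\{v_1,\dots,v_{2r}\}$ is symmetric if $Q(v_i)=0$ for all $i$ and $B(v_i,v_j)=1$ for all $i\ne j$. *)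

(* Defs.v *)
From HB Require Import structures.
From mathcomp Require Import all_boot all_order all_algebra.
Set Implicit Arguments. Unset Strict Implicit. Unset Printing Implicit Defensive.
Import GRing.Theory.
Local Open Scope ring_scope.

Section QuadForms.
Variables (K : fieldType) (V : vectType K).

Definition assoc_bil (Q : V -> K) (u v : V) : K := Q (u + v) - Q u - Q v.

Definition quadratic_form (Q : V -> K) : Prop :=
  [/\ forall (a : K) (v : V), Q (a *: v) = a ^+ 2 * Q v,
      forall (a : K) (u w v : V),
        assoc_bil Q (a *: u + w) v = a * assoc_bil Q u v + assoc_bil Q w v
    & forall (a : K) (u v w : V),
        assoc_bil Q u (a *: v + w) = a * assoc_bil Q u v + assoc_bil Q u w].

Definition qf_nondegenerate (Q : V -> K) : Prop :=
  forall u : V, (forall v : V, assoc_bil Q u v = 0) -> u = 0.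

Definition qf_hyperbolic (r : nat) (Q : V -> K) : Prop :=
  exists (e f : 'I_r -> V),
    [/\ basis_of fullv ([seq e i | i <- enum 'I_r] ++ [seq f i | i <- enum 'I_r]),
        forall i, Q (e i) = 0 /\ Q (f i) = 0
      & forall i j, [/\ assoc_bil Q (e i) (e j) = 0, assoc_bil Q (f i) (f j) = 0
                      & assoc_bil Q (e i) (f j) = (i == j)%:R]].

Definition qf_elliptic (r : nat) (Q : V -> K) : Prop :=
  exists (e f : 'I_r.-1 -> V) (x y : V),
    [/\ basis_of fullv ([seq e i | i <- enum 'I_r.-1] ++ [seq f i | i <- enum 'I_r.-1]
                          ++ [:: x; y]),
        forall i, Q (e i) = 0 /\ Q (f i) = 0,
        forall i j, [/\ assoc_bil Q (e i) (e j) = 0, assoc_bil Q (f i) (f j) = 0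
                      & assoc_bil Q (e i) (f j) = (i == j)%:R],
        forall i, [/\ assoc_bil Q (e i) x = 0, assoc_bil Q (e i) y = 0,
                      assoc_bil Q (f i) x = 0 & assoc_bil Q (f i) y = 0]
      & [/\ Q x = 1, Q y = 1 & assoc_bil Q x y = 1]].

Definition qf_symmetric_basis (n : nat) (Q : V -> K) (v : 'I_n -> V) : Prop :=
  [/\ basis_of fullv [seq v i | i <- enum 'I_n],
      forall i, Q (v i) = 0
    & forall i j, i != j -> assoc_bil Q (v i) (v j) = 1].

End QuadForms.

(* Main.v *)
Require Import Defs.
From HB Require Import structures.
From mathcomp Require Import all_boot all_order all_algebra.
From mathcomp Require Import zify ring.
Local Open Scope ring_scope.
Import GRing.Theory.
Set Implicit Arguments. Unset Strict Implicit. Unset Printing Implicit Defensive.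

Lemma F2_1p1 : (1 + 1 : 'F_2) = 0. Proof. by apply/eqP. Qed.
Lemma F2_cases (x : 'F_2) : x = 0 \/ x = 1.
Proof. case: x => [[|[|]]] //= H; [left|right]; exact: val_inj. Qed.

Section QF.
Variable V : vectType 'F_2.
Variable Q : V -> 'F_2.
Hypothesis qfQ : quadratic_form Q.
Local Notation B := (assoc_bil Q).

Lemma Q0 : Q 0 = 0.
Proof. case: qfQ => HZ _ _; by rewrite -(scale0r 0) HZ expr2 !mul0r. Qed.

Lemma B0l v : B 0 v = 0.
Proof. by rewrite /assoc_bil add0r Q0 subr0 subrr. Qed.

Lemma BC u v : B u v = B v u.
Proof. by rewrite /assoc_bil [v + u]addrC addrAC. Qed.

Lemma B0r v : B v 0 = 0.
Proof. by rewrite BC B0l. Qed.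

Lemma BDl u w v : B (u + w) v = B u v + B w v.
Proof. case: qfQ => _ H _; by rewrite -[u]scale1r H mul1r scale1r. Qed.

Lemma BDr u v w : B u (v + w) = B u v + B u w.
Proof. by rewrite BC BDl !(BC u). Qed.

Lemma BZl a u v : B (a *: u) v = a * B u v.
Proof. case: qfQ => _ H _; by rewrite -[a *: u]addr0 H B0l addr0. Qed.

Lemma BZr a u v : B u (a *: v) = a * B u v.
Proof. by rewrite BC BZl BC. Qed.

Lemma vv0 (u : V) : u + u = 0.
Proof. by rewrite -[u]scale1r -scalerDl F2_1p1 scale0r. Qed.

Lemma Bxx u : B u u = 0.
Proof.
rewrite /assoc_bil vv0 Q0 sub0r -opprD.
by case: (F2_cases (Q u)) => ->; apply/eqP.
Qed.

Lemma QD u v : Q (u + v) = Q u + Q v + B u v.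
Proof. rewrite /assoc_bil; ring. Qed.

Lemma Bsumr y (I : Type) (r : seq I) (P : pred I) (F : I -> V) :
  B y (\sum_(i <- r | P i) F i) = \sum_(i <- r | P i) B y (F i).
Proof. by apply: (big_morph (B y)); [exact: BDr | exact: B0r]. Qed.

Definition dual (X Y : seq V) :=
  size Y = size X /\ forall i j, (i < size X)%N -> (j < size X)%N ->
    B (nth 0 Y j) (nth 0 X i) = (i == j)%:R.

Lemma dual_free X Y : dual X Y -> free X.
Proof.
case=> _ H; suff: free (in_tuple X) by [].
apply/freeP => k Hk j.
have := congr1 (B (nth 0 Y j)) Hk.
rewrite B0r Bsumr.
under eq_bigr => i _ do rewrite BZr (H i j (ltn_ord i) (ltn_ord j)).
rewrite (bigD1 j) //= eqxx mulr1 big1 ?addr0 // => i hij.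
have -> : (i == j :> nat) = false by exact: negbTE hij.
by rewrite mulr0.
Qed.

Lemma dual_cat X1 Y1 X2 Y2 : dual X1 Y1 -> dual X2 Y2 ->
  (forall i j, (i < size X2)%N -> (j < size X1)%N -> B (nth 0 Y1 j) (nth 0 X2 i) = 0) ->
  (forall i j, (i < size X1)%N -> (j < size X2)%N -> B (nth 0 Y2 j) (nth 0 X1 i) = 0) ->
  dual (X1 ++ X2) (Y1 ++ Y2).
Proof.
case=> s1 H1 [s2 H2] C12 C21; split; first by rewrite !size_cat s1 s2.
rewrite size_cat => i j hi hj; rewrite !nth_cat s1.
set n1 := size X1 in H1 C12 C21 hi hj *; set n2 := size X2 in H2 C12 C21 hi hj *.
case: (ltnP i n1) => i1; case: (ltnP j n1) => j1.
- exact: H1.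
- have -> : (i == j) = false by apply/eqP; lia.
  by apply: C21 => //; lia.
- have -> : (i == j) = false by apply/eqP; lia.
  by apply: C12 => //; lia.
- have -> : (i == j) = (i - n1 == j - n1)%N by apply/eqP/eqP; lia.
  by apply: H2; lia.
Qed.

Lemma nth_mapE (n : nat) (g : 'I_n -> V) i (Hi : (i < n)%N) :
  nth 0 [seq g j | j <- enum 'I_n] i = g (Ordinal Hi).
Proof.
rewrite (nth_map (Ordinal Hi)) ?size_enum_ord //; congr g.
by apply: val_inj; rewrite /= nth_enum_ord.
Qed.

Lemma dual_map n (g h : 'I_n -> V) :
  (forall a b, B (h b) (g a) = (a == b)%:R) ->
  dual [seq g j | j <- enum 'I_n] [seq h j | j <- enum 'I_n].
Proof.
move=> H; split; first by rewrite !size_map.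
rewrite size_map size_enum_ord => i j hi hj.
by rewrite (@nth_mapE _ g _ hi) (@nth_mapE _ h _ hj) H.
Qed.

Lemma cross_map n (g h : 'I_n -> V) :
  (forall a b, B (h b) (g a) = 0) ->
  forall i j, (i < size [seq g j | j <- enum 'I_n])%N ->
              (j < size [seq g j | j <- enum 'I_n])%N ->
  B (nth 0 [seq h j | j <- enum 'I_n] j) (nth 0 [seq g j | j <- enum 'I_n] i) = 0.
Proof.
move=> H i j; rewrite size_map size_enum_ord => hi hj.
by rewrite (@nth_mapE _ g _ hi) (@nth_mapE _ h _ hj) H.
Qed.

Definition HypF n (e f : 'I_n -> V) :=
  (forall i, Q (e i) = 0 /\ Q (f i) = 0) /\
  (forall i j, [/\ B (e i) (e j) = 0, B (f i) (f j) = 0 & B (e i) (f j) = (i == j)%:R]).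
Definition OrthF n (e f : 'I_n -> V) w := forall i, B w (e i) = 0 /\ B w (f i) = 0.
Definition consF n (x : V) (e : 'I_n -> V) (i : 'I_n.+1) : V :=
  if unlift ord0 i is Some j then e j else x.
Definition Aniso x y := [/\ Q x = 1, Q y = 1 & B x y = 1].

Lemma liftne0 n (h : 'I_n) : (lift ord0 h != ord0 :> 'I_n.+1) = true.
Proof. by rewrite eq_sym neq_lift. Qed.
Lemma ord0ne n (h : 'I_n) : (ord0 != lift ord0 h :> 'I_n.+1) = true.
Proof. by rewrite neq_lift. Qed.

Lemma ordS_cases n (i : 'I_n.+1) : i = ord0 \/ exists j, i = lift ord0 j.
Proof. by case: (unliftP ord0 i) => [j ->|h]; [right; exists j | left]. Qed.

Lemma cons_hyp n (e f : 'I_n -> V) e0 f0 : HypF e f -> Q e0 = 0 -> Q f0 = 0 ->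
  B e0 f0 = 1 -> OrthF e f e0 -> OrthF e f f0 -> HypF (consF e0 e) (consF f0 f).
Proof.
move=> [HQ HB] Qe Qf Bef Oe Of; split.
  by move=> i; case: (ordS_cases i) => [->|[j ->]]; rewrite /consF ?liftK ?unlift_none.
move=> i j; case: (ordS_cases i) => [->|[i' ->]]; case: (ordS_cases j) => [->|[j' ->]];
  rewrite /consF ?liftK ?unlift_none.
- by rewrite eqxx !Bxx.
- rewrite (negbTE (ord0ne _)).
  by case: (Oe j') => -> _; case: (Of j') => _ ->; case: (Oe j') => _ ->.
- rewrite (negbTE (liftne0 _)) !(BC _ e0) !(BC _ f0).
  by case: (Oe i') => -> _; case: (Of i') => _ ->; case: (Of i') => -> _.
- rewrite (inj_eq (@lift_inj _ ord0)); exact: HB.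
Qed.

Lemma cons_orth n (e f : 'I_n -> V) e0 f0 w : OrthF e f w -> B w e0 = 0 -> B w f0 = 0 ->
  OrthF (consF e0 e) (consF f0 f) w.
Proof.
move=> Ow h1 h2 i; case: (ordS_cases i) => [->|[j ->]]; rewrite /consF ?liftK ?unlift_none //.
Qed.

Lemma OrthF_add n (e f : 'I_n -> V) a b : OrthF e f a -> OrthF e f b -> OrthF e f (a + b).
Proof.
move=> Ha Hb i; rewrite !BDl; case: (Ha i) => -> ->; case: (Hb i) => -> ->.
by rewrite addr0.
Qed.

Lemma HypF_cast n1 n2 (E : n1 = n2) (e f : 'I_n2 -> V) :
  HypF e f -> HypF (e \o cast_ord E) (f \o cast_ord E).
Proof.
move=> [HQ HB]; split=> [i|i j] /=; first exact: HQ.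
by rewrite -(inj_eq (@cast_ord_inj _ _ E)); apply: HB.
Qed.

Lemma OrthF_cast n1 n2 (E : n1 = n2) (e f : 'I_n2 -> V) w :
  OrthF e f w -> OrthF (e \o cast_ord E) (f \o cast_ord E) w.
Proof. by move=> H i; apply: H. Qed.

Fixpoint dbl m := if m is m'.+1 then (dbl m').+2 else 0%N.
Fixpoint arfb m (b : bool) := if m is m'.+1 then b (+) arfb m' (~~ b) else false.

Lemma decomp m : forall (b : bool) (u : 'I_(dbl m) -> V),
 (forall i, Q (u i) = b%:R) -> (forall i j, i != j -> B (u i) (u j) = 1) ->
 if arfb m b then
  exists n, m = n.+1 /\ exists (e f : 'I_n -> V) (x y : V),
   [/\ HypF e f, Aniso x y, OrthF e f x, OrthF e f y &
       forall w, (forall i, B w (u i) = 0) -> [/\ OrthF e f w, B w x = 0 & B w y = 0]]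
 else exists e f : 'I_m -> V, HypF e f /\
   forall w, (forall i, B w (u i) = 0) -> OrthF e f w.
Proof.
elim: m => [|m IH] b u HQ HB /=.
  exists (fun _ => 0), (fun _ => 0); split; first by split; case.
  by move=> w _; case.
have Bu i j : B (u i) (u j) = (i != j)%:R.
  by case: (eqVneq i j) => [->|h]; [rewrite Bxx | rewrite HB].
pose u0 := u ord0; pose u1 := u (lift ord0 ord0).
pose u' := fun k : 'I_(dbl m) => u (lift ord0 (lift ord0 k)) + u0 + u1.
have HQ' k : Q (u' k) = (~~ b)%:R.
  rewrite /u' /u0 /u1 !QD !BDl !Bu !HQ ?liftne0 ?ord0ne ?(inj_eq (@lift_inj _ ord0)) ?liftne0.
  by case: b HQ => _; apply/eqP.
have HB' k l : k != l -> B (u' k) (u' l) = 1.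
  move=> hkl; rewrite /u' /u0 /u1 !BDl !BDr !Bu ?liftne0 ?ord0ne
    ?(inj_eq (@lift_inj _ ord0)) ?liftne0 ?hkl ?eqxx; last first.
  by apply/eqP.
have Bu0' k : B u0 (u' k) = 0.
  rewrite /u' /u0 /u1 !BDr !Bu ?liftne0 ?ord0ne ?(inj_eq (@lift_inj _ ord0)) ?liftne0 ?eqxx.
  by apply/eqP.
have Bu1' k : B u1 (u' k) = 0.
  rewrite /u' /u0 /u1 !BDr !Bu ?liftne0 ?ord0ne ?(inj_eq (@lift_inj _ ord0)) ?liftne0 ?eqxx.
  by apply/eqP.
have Bw' w : (forall i, B w (u i) = 0) -> forall k, B w (u' k) = 0.
  by move=> Hw k; rewrite /u' !BDr !Hw !addr0.
have Bu01 : B u0 u1 = 1 by rewrite Bu ord0ne.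
have := IH (~~ b) u' HQ' HB'.
case: b HQ HQ' => HQ HQ' /=.
- case: (arfb m false) => /=.
  + move=> [n [Em [e [f [x [y [Hh [Qx Qy Bxy] Ox Oy Hs]]]]]]].
    case: (Hs u0 (Bu0' )) => Oe0 Bx0 By0.
    case: (Hs u1 (Bu1' )) => Oe1 Bx1 By1.
    pose ea := u0 + x; pose fa := u1 + x; pose eb := u0 + u1 + y; pose fb := u0 + u1 + x + y.
    have Qu0 : Q u0 = 1 by rewrite HQ.
    have Qu1 : Q u1 = 1 by rewrite HQ.
    have Bu10 : B u1 u0 = 1 by rewrite BC.
    have Bx0' : B x u0 = 0 by rewrite BC.
    have By0' : B y u0 = 0 by rewrite BC.
    have Bx1' : B x u1 = 0 by rewrite BC.
    have By1' : B y u1 = 0 by rewrite BC.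
    have Byx : B y x = 1 by rewrite BC.
    have Oa : OrthF e f ea by repeat apply: OrthF_add.
    have Ofa : OrthF e f fa by repeat apply: OrthF_add.
    have Ob : OrthF e f eb by repeat apply: OrthF_add.
    have Ofb : OrthF e f fb by repeat apply: OrthF_add.
    have Em' : m.+1 = n.+2 by rewrite Em.
    exists (consF ea (consF eb e) \o cast_ord Em'), (consF fa (consF fb f) \o cast_ord Em').
    split.
      apply: HypF_cast; apply: cons_hyp.
      * apply: cons_hyp => //.
        - by rewrite /ea /fa /eb /fb ?QD ?BDl ?BDr ?QD ?BDl ?BDr ?Bxx ?Qu0 ?Qu1 ?Qx ?Qy ?Bu01 ?Bu10 ?Bx0 ?Bx1 ?By0 ?By1 ?Bx0' ?Bx1' ?By0' ?By1' ?Bxy ?Byx; apply/eqP.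
        - by rewrite /ea /fa /eb /fb ?QD ?BDl ?BDr ?QD ?BDl ?BDr ?Bxx ?Qu0 ?Qu1 ?Qx ?Qy ?Bu01 ?Bu10 ?Bx0 ?Bx1 ?By0 ?By1 ?Bx0' ?Bx1' ?By0' ?By1' ?Bxy ?Byx; apply/eqP.
        - by rewrite /ea /fa /eb /fb ?QD ?BDl ?BDr ?QD ?BDl ?BDr ?Bxx ?Qu0 ?Qu1 ?Qx ?Qy ?Bu01 ?Bu10 ?Bx0 ?Bx1 ?By0 ?By1 ?Bx0' ?Bx1' ?By0' ?By1' ?Bxy ?Byx; apply/eqP.
      * by rewrite /ea /fa /eb /fb ?QD ?BDl ?BDr ?QD ?BDl ?BDr ?Bxx ?Qu0 ?Qu1 ?Qx ?Qy ?Bu01 ?Bu10 ?Bx0 ?Bx1 ?By0 ?By1 ?Bx0' ?Bx1' ?By0' ?By1' ?Bxy ?Byx; apply/eqP.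
      * by rewrite /ea /fa /eb /fb ?QD ?BDl ?BDr ?QD ?BDl ?BDr ?Bxx ?Qu0 ?Qu1 ?Qx ?Qy ?Bu01 ?Bu10 ?Bx0 ?Bx1 ?By0 ?By1 ?Bx0' ?Bx1' ?By0' ?By1' ?Bxy ?Byx; apply/eqP.
      * by rewrite /ea /fa /eb /fb ?QD ?BDl ?BDr ?QD ?BDl ?BDr ?Bxx ?Qu0 ?Qu1 ?Qx ?Qy ?Bu01 ?Bu10 ?Bx0 ?Bx1 ?By0 ?By1 ?Bx0' ?Bx1' ?By0' ?By1' ?Bxy ?Byx; apply/eqP.
      * apply: cons_orth => //.
        - by rewrite /ea /fa /eb /fb ?QD ?BDl ?BDr ?QD ?BDl ?BDr ?Bxx ?Qu0 ?Qu1 ?Qx ?Qy ?Bu01 ?Bu10 ?Bx0 ?Bx1 ?By0 ?By1 ?Bx0' ?Bx1' ?By0' ?By1' ?Bxy ?Byx; apply/eqP.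
        - by rewrite /ea /fa /eb /fb ?QD ?BDl ?BDr ?QD ?BDl ?BDr ?Bxx ?Qu0 ?Qu1 ?Qx ?Qy ?Bu01 ?Bu10 ?Bx0 ?Bx1 ?By0 ?By1 ?Bx0' ?Bx1' ?By0' ?By1' ?Bxy ?Byx; apply/eqP.
      * apply: cons_orth => //.
        - by rewrite /ea /fa /eb /fb ?QD ?BDl ?BDr ?QD ?BDl ?BDr ?Bxx ?Qu0 ?Qu1 ?Qx ?Qy ?Bu01 ?Bu10 ?Bx0 ?Bx1 ?By0 ?By1 ?Bx0' ?Bx1' ?By0' ?By1' ?Bxy ?Byx; apply/eqP.
        - by rewrite /ea /fa /eb /fb ?QD ?BDl ?BDr ?QD ?BDl ?BDr ?Bxx ?Qu0 ?Qu1 ?Qx ?Qy ?Bu01 ?Bu10 ?Bx0 ?Bx1 ?By0 ?By1 ?Bx0' ?Bx1' ?By0' ?By1' ?Bxy ?Byx; apply/eqP.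
    move=> w Hw; case: (Hs w (Bw' w Hw)) => Ow Bwx Bwy.
    have Bw0 : B w u0 = 0 by apply: Hw.
    have Bw1 : B w u1 = 0 by apply: Hw.
    apply: OrthF_cast; apply: cons_orth; first apply: cons_orth => //.
    1-4: by rewrite /ea /fa /eb /fb ?BDr ?BDr ?Bw0 ?Bw1 ?Bwx ?Bwy; apply/eqP.
  + move=> [e [f [Hh Hs]]].
    exists m; split => //; exists e, f, u0, u1; split => //.
    * by split; rewrite ?HQ.
    * exact: Hs.
    * exact: Hs.
    * move=> w Hw; split; [apply: Hs; exact: Bw' | exact: Hw | exact: Hw].
- have Qu0 : Q u0 = 0 by rewrite HQ.
  have Qu1 : Q u1 = 0 by rewrite HQ.
  case: (arfb m true) => /=.
  + move=> [n [Em [e [f [x [y [Hh Ha Ox Oy Hs]]]]]]].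
    case: (Hs u0 (Bu0' )) => Oe0 Bx0 By0.
    case: (Hs u1 (Bu1' )) => Oe1 Bx1 By1.
    exists n.+1; split; first by rewrite Em. exists (consF u0 e), (consF u1 f), x, y; split => //.
    * exact: cons_hyp.
    * by apply: cons_orth; rewrite // BC.
    * by apply: cons_orth; rewrite // BC.
    * move=> w Hw; case: (Hs w (Bw' w Hw)) => Ow Bwx Bwy; split => //.
      by apply: cons_orth => //; apply: Hw.
  + move=> [e [f [Hh Hs]]].
    exists (consF u0 e), (consF u1 f); split.
      by apply: cons_hyp => //; apply: Hs.
    move=> w Hw; apply: cons_orth; [apply: Hs; exact: Bw' | exact: Hw | exact: Hw].
Qed.

Lemma cross_of (X Y : seq V) k : size Y = k ->
  (forall z w, z \in Y -> w \in X -> B z w = 0) ->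
  forall i j, (i < size X)%N -> (j < k)%N -> B (nth 0 Y j) (nth 0 X i) = 0.
Proof.
move=> <- H i j hi hj; apply: H; exact: mem_nth.
Qed.

Lemma hyp_dual n (e f : 'I_n -> V) : HypF e f ->
  dual ([seq e i | i <- enum 'I_n] ++ [seq f i | i <- enum 'I_n])
       ([seq f i | i <- enum 'I_n] ++ [seq e i | i <- enum 'I_n]).
Proof.
move=> [HQ HB]; apply: dual_cat.
- by apply: dual_map => a b; rewrite BC; case: (HB a b).
- by apply: dual_map => a b; rewrite eq_sym; case: (HB b a).
- apply: cross_of; first by rewrite !size_map.
  by move=> z w /mapP[a _ ->] /mapP[b _ ->]; case: (HB a b).
- apply: cross_of; first by rewrite !size_map.
  by move=> z w /mapP[a _ ->] /mapP[b _ ->]; case: (HB a b).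
Qed.

End QF.


Lemma arfb4 n b : arfb n.+4 b = arfb n b.
Proof. by case: b => /=; case: (arfb n _). Qed.

Lemma arfb_mod r b : arfb r b = arfb (r %% 4)%N b.
Proof.
rewrite {1}(divn_eq r 4); elim: (r %/ 4)%N => [|q IH]; first by rewrite mul0n add0n.
have -> : (q.+1 * 4 + r %% 4 = (q * 4 + r %% 4).+4)%N by rewrite mulSn; lia.
by rewrite arfb4.
Qed.

Lemma dblE r : dbl r = (2 * r)%N.
Proof. elim: r => //= r ->; lia. Qed.

Theorem lemma3p4 (r : nat) (V : vectType 'F_2) (Q : V -> 'F_2) :
  (1 <= r)%N ->
  \dim (fullv : {vspace V}) = (2 * r)%N ->
  quadratic_form Q ->
  qf_nondegenerate Q ->
  (exists v : 'I_(2 * r) -> V, qf_symmetric_basis Q v) ->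
  ((r %% 4 == 0)%N || (r %% 4 == 1)%N -> qf_hyperbolic r Q) /\
  ((r %% 4 == 2)%N || (r %% 4 == 3)%N -> qf_elliptic r Q).
Proof.
move=> r1 Hdim qfQ _ [v [_ Hv0 Hv1]].
pose u := fun i : 'I_(dbl r) => v (cast_ord (dblE r) i).
have HQ i : Q (u i) = false%:R by rewrite Hv0.
have HB i j : i != j -> assoc_bil Q (u i) (u j) = 1.
  by move=> hij; apply: Hv1; rewrite (inj_eq (@cast_ord_inj _ _ _)).
have := @decomp V Q qfQ r false u HQ HB.
have Hm : (r %% 4 < 4)%N by rewrite ltn_pmod.
have Hc : ((r %% 4 == 0)%N || (r %% 4 == 1)%N) = ~~ ((r %% 4 == 2)%N || (r %% 4 == 3)%N).
  by move: (r %% 4)%N Hm; do 4! case=> //.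
have Ha : arfb r false = ((r %% 4 == 2)%N || (r %% 4 == 3)%N).
  by rewrite arfb_mod; move: (r %% 4)%N Hm; do 4! case=> //.
rewrite Ha Hc; case: ifP => _.
- move=> [n [Er [e [f [x [y [[HQe HBe] [Qx Qy Bxy] Ox Oy _]]]]]]].
  split => // _; subst r.
  exists e, f, x, y; split => //.
  + rewrite basisEfree; apply/and3P; split.
    * apply: (@dual_free _ _ qfQ _ (([seq f i | i <- enum 'I_n] ++ [seq e i | i <- enum 'I_n])
        ++ [:: y; x])).
      rewrite catA; apply: dual_cat => //.
      - exact: hyp_dual.
      - split => // i j; case: i => [|[|//]] _; case: j => [|[|//]] _ /=;
          rewrite ?Bxx //; rewrite BC //.
      - apply: cross_of; first by rewrite !size_cat !size_map.
        move=> z w; rewrite mem_cat => /orP[] /mapP[a _ ->]; rewrite !inE => /orP[] /eqP ->.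
        1-4: rewrite BC; case: (Ox a) => ? ?; case: (Oy a) => ? ?; by [].
      - apply: cross_of => //.
        move=> z w; rewrite !inE mem_cat => /orP[] /eqP -> /orP[] /mapP[a _ ->].
        1-4: case: (Ox a) => ? ?; case: (Oy a) => ? ?; by [].
    * exact: subvf.
    * rewrite Hdim !size_cat !size_map -!enumT -!cardT !card_ord /=; lia.
  + by move=> i; rewrite ![assoc_bil Q _ x]BC ![assoc_bil Q _ y]BC; case: (Ox i) => -> ->; case: (Oy i) => -> ->.
- move=> [e [f [Hh _]]]; split => // _.
  exists e, f; split => //; last by case: Hh.
  + rewrite basisEfree; apply/and3P; split.
    * apply: (dual_free qfQ); exact: hyp_dual.
    * exact: subvf.
    * rewrite Hdim !size_cat !size_map -!enumT -!cardT !card_ord; lia.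
  + by case: Hh.
Qed.
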